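(* For each $n\in\mathbb N$, the subgroup $K_n^{\mathbb C}=\{a\in\mathcal B^{\mathbb C}_{TM}\mid a(\tau)=0\ \text{for all }\tau\in\mathcal T\text{ with }|\tau|\le n\}$ is a closed normal Lie subgroup of $\mathcal B^{\mathbb C}_{TM}$, and $K_n=K_n^{\mathbb C}\cap\mathcal B_{TM}$ is a closed normal subgroup of $\mathcal B_{TM}$. Both are split submanifolds of finite codimension (each is a closed affine subspace $e+\{a\in M^*_{\mathbb K}\mid a(\tau)=0\ \forall\,|\tau|\le n\}$ of the respective group).
   Context: $\mathcal T$ is the set of rooted trees (at least one vertex), $\mathcal T_0=\mathcal T\cup\{\emptyset\}$, $|\tau|$ the number of vertices. The complex tame Butcher group $\mathcal B^{\mathbb C}_{TM}$ is the set of $a\colon\mathcal T_0\to\mathbb C$ with $a(\emptyset)=1$ and $|a(\tau)|\le CK^{|\tau|}$ for some $C,K>0$ and all $\tau\in\mathcal T$, with product $(a\cdot b)(\tau)=\sum_{s\in\mathrm{OST}(\tau)}b(s_\tau)\prod_{\theta\in\tau\setminus s}a(\theta)$ (sum over ordered subtrees $s$: vertex subsets connected in $\tau$ containing the root if nonempty; $s_\tau$ the induced tree; $\tau\setminus s$ the remaining forest) and unit $e$; $\mathcal B_{TM}$ is its real-valued subgroup. For $\mathbb K\in\{\mathbb R,\mathbb C\}$, $M^*_{\mathbb K}=\{a\in\bigcup_k\mathbb K^{\mathcal T_0}(\omega_k)\mid a(\emptyset)=0\}$ with the inductive limit topology of the Banach spaces $\mathbb K^{\mathcal T_0}(\omega_k)=\{a\mid\sup_\tau|a(\tau)|2^{-k|\tau|}<\infty\}$;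 the groups are analytic Lie groups modelled on $M^*_{\mathbb K}$ via the global chart $a\mapsto a-e$. *)

(* Defs.v *)
From Stdlib Require Import Reals List Permutation.
Import ListNotations.
Open Scope R_scope.

(** * Scalars: K in {R, C}. C is modelled as R*R. *)
Record Scal := {
  car : Type;
  szero : car; sone : car;
  sadd : car -> car -> car; smul : car -> car -> car; sopp : car -> car;
  snrm : car -> R }.

Definition RS : Scal := {| car := R; szero := 0; sone := 1;
  sadd := Rplus; smul := Rmult; sopp := Ropp; snrm := Rabs |}.

Definition Cadd (z w : R * R) : R * R := (fst z + fst w, snd z + snd w).
Definition Cmul (z w : R * R) : R * R :=
  (fst z * fst w - snd z * snd w, fst z * snd w + snd z * fst w).
Definition Copp (z : R * R) : R * R := (- fst z, - snd z).
Definition Cnorm (z : R * R) : R := sqrt (fst z * fst z + snd z * snd z).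

Definition CS : Scal := {| car := R * R; szero := (0, 0); sone := (1, 0);
  sadd := Cadd; smul := Cmul; sopp := Copp; snrm := Cnorm |}.

(** * Rooted trees.  A (planar) representative; non-planar rooted trees are
    isomorphism classes, and all maps on trees are required to be
    isomorphism-invariant. *)
Inductive tree : Type := Node : list tree -> tree.

Inductive tree_iso : tree -> tree -> Prop :=
| iso_node : forall cs ds ds', Permutation ds ds' -> Forall2 tree_iso cs ds' ->
    tree_iso (Node cs) (Node ds).

Fixpoint tsize (t : tree) : nat :=
  match t with Node cs => S (list_sum (map tsize cs)) end.

Definition opt_cons (o : option tree) (l : list tree) : list tree :=
  match o with None => l | Some s => s :: l end.

(** Ordered subtrees of t: pairs (s_t, t \ s), with s_t = None for the empty
    subtree.  Either s is empty (forest = [t]), or s contains the root and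
    independently selects an ordered subtree in each child. *)
Fixpoint ost (t : tree) : list (option tree * list tree) :=
  match t with
  | Node cs =>
    let fix combos (l : list tree) : list (list tree * list tree) :=
      match l with
      | [] => [([], [])]
      | c :: l' =>
          flat_map (fun p => map (fun q => (opt_cons (fst p) (fst q), snd p ++ snd q))
                                 (combos l'))
                   (ost c)
      end in
    (None, [t]) :: map (fun q => (Some (Node (fst q)), snd q)) (combos cs)
  end.

(** * Maps T_0 -> K, with T_0 = option tree (None = empty tree). *)
Definition fn (S : Scal) := option tree -> car S.

Definition ssum (S : Scal) (l : list (car S)) : car S := fold_right (sadd S) (szero S) l.
Definition sprod (S : Scal) (l : list (car S)) : car S := fold_right (smul S) (sone S) l.

Definition invariant {S : Scal} (a : fn S) : Prop :=
  forall t u, tree_iso t u -> a (Some t) = a (Some u).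

Definition feq {S : Scal} (a b : fn S) : Prop := forall x, a x = b x.

Definition unit_e (S : Scal) : fn S :=
  fun x => match x with None => sone S | Some _ => szero S end.

Definition fadd {S : Scal} (a b : fn S) : fn S := fun x => sadd S (a x) (b x).
Definition fscale {S : Scal} (l : car S) (a : fn S) : fn S := fun x => smul S l (a x).
Definition fsub {S : Scal} (a b : fn S) : fn S := fun x => sadd S (a x) (sopp S (b x)).
Definition fzero (S : Scal) : fn S := fun _ => szero S.

Definition bmul {S : Scal} (a b : fn S) : fn S :=
  fun x => match x with
  | None => b None
  | Some t => ssum S (map (fun p => smul S (b (fst p))
                                 (sprod S (map (fun th => a (Some th)) (snd p)))) (ost t))
  end.

(** Tame Butcher group B^K_TM (K = R gives B_TM, K = C gives B^C_TM). *)
Definition in_BTM (S : Scal) (a : fn S) : Prop :=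
  invariant a /\ a None = sone S /\
  exists C K, 0 < C /\ 0 < K /\ forall t, snrm S (a (Some t)) <= C * K ^ tsize t.

Definition in_Kn (S : Scal) (n : nat) (a : fn S) : Prop :=
  in_BTM S a /\ forall t, (tsize t <= n)%nat -> a (Some t) = szero S.

(** * The model space M*_K with the (locally convex) inductive limit topology. *)
Definition in_Ek (S : Scal) (k : nat) (a : fn S) : Prop :=
  exists M, forall t, snrm S (a (Some t)) <= M * (2 ^ (k * tsize t)).

Definition in_Mstar (S : Scal) (a : fn S) : Prop :=
  invariant a /\ a None = szero S /\ exists k, in_Ek S k a.

Definition abs_convex (S : Scal) (V : fn S -> Prop) : Prop :=
  forall u v l m, V u -> V v -> snrm S l + snrm S m <= 1 ->
    V (fadd (fscale l u) (fscale m v)).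

Definition zero_nbhd_in_steps (S : Scal) (V : fn S -> Prop) : Prop :=
  forall k, exists r, 0 < r /\ forall a, in_Mstar S a ->
    (forall t, snrm S (a (Some t)) <= r * (2 ^ (k * tsize t))) -> V a.

Definition Mopen (S : Scal) (U : fn S -> Prop) : Prop :=
  (forall x, U x -> in_Mstar S x) /\
  forall x, U x -> exists V, (forall v, V v -> in_Mstar S v) /\ abs_convex S V /\
    zero_nbhd_in_steps S V /\ forall v, V v -> U (fadd x v).

Definition Mclosed (S : Scal) (C : fn S -> Prop) : Prop :=
  (forall x, C x -> in_Mstar S x) /\ Mopen S (fun x => in_Mstar S x /\ ~ C x).

Definition in_Fn (S : Scal) (n : nat) (a : fn S) : Prop :=
  in_Mstar S a /\ forall t, (tsize t <= n)%nat -> a (Some t) = szero S.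

Definition linear_on_M (S : Scal) (P : fn S -> fn S) : Prop :=
  (forall x, in_Mstar S x -> in_Mstar S (P x)) /\
  (forall x y, in_Mstar S x -> in_Mstar S y -> feq (P (fadd x y)) (fadd (P x) (P y))) /\
  (forall l x, in_Mstar S x -> feq (P (fscale l x)) (fscale l (P x))).

Definition continuous_on_M (S : Scal) (P : fn S -> fn S) : Prop :=
  forall U, Mopen S U -> Mopen S (fun x => in_Mstar S x /\ U (P x)).

Definition lin_comb (S : Scal) (cs : list (car S)) (gs : list (fn S)) : fn S :=
  fold_right (fun p acc => fadd (fscale (fst p) (snd p)) acc) (fzero S) (combine cs gs).

(** F is a split (topologically complemented) subspace of finite codimension:
    F is the kernel of a continuous linear projection with finite-dimensional
    range. *)
Definition split_finite_codim (S : Scal) (F : fn S -> Prop) : Prop :=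
  exists (P : fn S -> fn S) (gs : list (fn S)),
    linear_on_M S P /\ continuous_on_M S P /\
    (forall x, in_Mstar S x -> feq (P (P x)) (P x)) /\
    (forall x, in_Mstar S x -> (feq (P x) (fzero S) <-> F x)) /\
    Forall (in_Mstar S) gs /\
    (forall x, in_Mstar S x -> exists cs, length cs = length gs /\ feq (P x) (lin_comb S cs gs)).

(* Main.v *)
Require Import Defs.
From Stdlib Require Import Reals List Permutation Lra Lia ClassicalEpsilon Classical Relation_Operators FunctionalExtensionality.
Import ListNotations.
Open Scope R_scope.

Record goodS (S : Scal) : Prop := {
  addA : forall x y z, sadd S x (sadd S y z) = sadd S (sadd S x y) z;
  addC : forall x y, sadd S x y = sadd S y x;
  add0 : forall x, sadd S (szero S) x = x;
  mulA : forall x y z, smul S x (smul S y z) = smul S (smul S x y) z;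
  mulC : forall x y, smul S x y = smul S y x;
  mul1 : forall x, smul S (sone S) x = x;
  mul0 : forall x, smul S (szero S) x = szero S;
  addN : forall x, sadd S x (sopp S x) = szero S;
  addK : forall x v, sadd S (sadd S x v) (sopp S v) = x;
  oppz : sopp S (szero S) = szero S;
  nrm0 : snrm S (szero S) = 0;
  nrm1 : snrm S (sone S) = 1;
  nrm_ge0 : forall x, 0 <= snrm S x;
  nrm_tri : forall x y, snrm S (sadd S x y) <= snrm S x + snrm S y;
  nrm_mul : forall x y, snrm S (smul S x y) = snrm S x * snrm S y;
  nrm_opp : forall x, snrm S (sopp S x) = snrm S x;
  nrm_eq0 : forall x, snrm S x = 0 -> x = szero S }.

Lemma good_RS : goodS RS.
Proof.
  split; simpl; intros; try ring.
  - apply Rabs_R0.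
  - apply Rabs_R1.
  - apply Rabs_pos.
  - apply Rabs_triang.
  - apply Rabs_mult.
  - apply Rabs_Ropp.
  - destruct (Req_dec x 0); auto. apply Rabs_no_R0 in H0. contradiction.
Qed.

Lemma csqrt_tri a b c d :
  sqrt ((a+c)*(a+c) + (b+d)*(b+d)) <= sqrt (a*a+b*b) + sqrt (c*c+d*d).
Proof.
  assert (HA : 0 <= a*a+b*b) by nra. assert (HB : 0 <= c*c+d*d) by nra.
  assert (HAB: a*c+b*d <= sqrt (a*a+b*b) * sqrt (c*c+d*d)).
  { rewrite <- sqrt_mult by auto.
    destruct (Rle_or_lt (a*c+b*d) 0). { pose proof (sqrt_pos ((a*a+b*b)*(c*c+d*d))). lra. }
    rewrite <- (sqrt_pow2 (a*c+b*d)) by lra. apply sqrt_le_1_alt. pose proof (pow2_ge_0 (a*d-b*c)). nra. }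
  pose proof (sqrt_pos (a*a+b*b)). pose proof (sqrt_pos (c*c+d*d)).
  apply Rsqr_incr_0_var; [|lra]. unfold Rsqr.
  rewrite sqrt_sqrt by (pose proof (Rle_0_sqr (a+c)); pose proof (Rle_0_sqr (b+d)); unfold Rsqr in *; lra).
  replace ((sqrt (a * a + b * b) + sqrt (c * c + d * d)) * (sqrt (a * a + b * b) + sqrt (c * c + d * d)))
   with (sqrt (a * a + b * b) * sqrt (a * a + b * b) + sqrt (c * c + d * d) * sqrt (c * c + d * d) + 2 * (sqrt (a * a + b * b) * sqrt (c * c + d * d))) by ring.
  rewrite !sqrt_sqrt by auto. nra.
Qed.

Lemma good_CS : goodS CS.
Proof.
  split; simpl; unfold Cadd, Cmul, Copp, Cnorm; intros;
   repeat match goal with p : (R*R)%type |- _ => destruct p end; simpl in *;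
   try (f_equal; ring).
  - replace (0*0+0*0) with 0 by ring. apply sqrt_0.
  - replace (1*1+0*0) with 1 by ring. apply sqrt_1.
  - apply sqrt_pos.
  - apply csqrt_tri.
  - rewrite <- sqrt_mult by nra. f_equal. ring.
  - apply sqrt_eq_0 in H; [|nra]. f_equal; nra.
Qed.

Section TI.
Variable P : tree -> Prop.
Hypothesis HP : forall cs, (forall c, In c cs -> P c) -> P (Node cs).
Fixpoint tree_ind' (t : tree) : P t :=
  match t with
  | Node cs => HP cs ((fix go (l : list tree) : forall c, In c l -> P c :=
       match l with
       | [] => fun c H => False_ind _ H
       | x :: l' => fun c H => match H with
                   | or_introl e => eq_ind x P (tree_ind' x) c e
                   | or_intror H' => go l' c H' end end) cs)
  end.
End TI.

Fixpoint combos (l : list tree) : list (list tree * list tree) :=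
  match l with
  | [] => [([], [])]
  | c :: l' =>
      flat_map (fun p => map (fun q => (opt_cons (fst p) (fst q), snd p ++ snd q))
                             (combos l'))
               (ost c)
  end.

Lemma ost_node cs : ost (Node cs) =
  (None, [Node cs]) :: map (fun q => (Some (Node (fst q)), snd q)) (combos cs).
Proof.
  simpl. reflexivity.
Qed.

Definition osize (o : option tree) : nat := match o with None => 0%nat | Some t => tsize t end.
Definition lsize (l : list tree) : nat := list_sum (map tsize l).

Lemma lsize_app a b : lsize (a ++ b) = (lsize a + lsize b)%nat.
Proof. unfold lsize. rewrite map_app, list_sum_app. reflexivity. Qed.

Lemma lsize_opt o x : lsize (opt_cons o x) = (osize o + lsize x)%nat.
Proof. destruct o; reflexivity. Qed.

Lemma combos_size l : (forall c, In c l -> forall p, In p (ost c) -> (osize (fst p) + lsize (snd p) = tsize c)%nat) ->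
  forall q, In q (combos l) -> (lsize (fst q) + lsize (snd q) = lsize l)%nat.
Proof.
  induction l as [|c l IH]; simpl; intros H q Hq.
  - destruct Hq as [<-|[]]. reflexivity.
  - apply in_flat_map in Hq as [p [Hp Hq]]. apply in_map_iff in Hq as [q' [<- Hq']].
    simpl. rewrite lsize_opt, lsize_app.
    specialize (IH (fun c' Hc' => H c' (or_intror Hc')) q' Hq').
    specialize (H c (or_introl eq_refl) p Hp). unfold lsize in *. simpl. lia.
Qed.

Lemma size_ost : forall t p, In p (ost t) -> (osize (fst p) + lsize (snd p) = tsize t)%nat.
Proof.
  apply (tree_ind' (fun t => forall p, In p (ost t) -> _)).
  intros cs IH p Hp. rewrite ost_node in Hp. destruct Hp as [<-|Hp].
  - simpl. unfold lsize; simpl. lia.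
  - apply in_map_iff in Hp as [q [<- Hq]]. simpl.
    pose proof (combos_size cs IH q Hq). unfold lsize in *. lia.
Qed.

Lemma ost_None t p : In p (ost t) -> fst p = None -> snd p = [t].
Proof.
  destruct t as [cs]. rewrite ost_node. intros [<-|Hp] E; auto.
  apply in_map_iff in Hp as [q [<- _]]. discriminate.
Qed.

Lemma length_flat_map_const {A B} (f : A -> list B) (l : list A) k :
  (forall x, length (f x) = k) -> length (flat_map f l) = (length l * k)%nat.
Proof. intros H. induction l; simpl; auto. rewrite length_app, H, IHl. lia. Qed.

Lemma combos_length l : (forall c, In c l -> (length (ost c) <= 2 ^ tsize c)%nat) ->
  (length (combos l) <= 2 ^ lsize l)%nat.
Proof.
  induction l as [|c l IH]; simpl; intros H; auto.
  rewrite (length_flat_map_const _ _ (length (combos l))).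
  2:{ intros; apply length_map. }
  unfold lsize in *; simpl. rewrite Nat.pow_add_r.
  apply Nat.mul_le_mono; auto.
Qed.

Lemma ost_length : forall t, (length (ost t) <= 2 ^ tsize t)%nat.
Proof.
  apply tree_ind'. intros cs IH. rewrite ost_node. simpl. rewrite length_map.
  pose proof (combos_length cs IH). unfold lsize in H.
  pose proof (Nat.pow_nonzero 2 (list_sum (map tsize cs))). lia.
Qed.

Lemma tsize_pos t : (1 <= tsize t)%nat.
Proof. destruct t; simpl; lia. Qed.

Lemma length_le_lsize l : (length l <= lsize l)%nat.
Proof. induction l; unfold lsize in *; simpl; auto. pose proof (tsize_pos a). lia. Qed.

Lemma in_le_lsize c l : In c l -> (tsize c <= lsize l)%nat.
Proof. induction l; unfold lsize in *; simpl; intros H; [contradiction|destruct H as [->|H]]; try lia. specialize (IHl H). lia. Qed.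

Lemma tree_iso_refl : forall t, tree_iso t t.
Proof.
  apply tree_ind'. intros cs IH. apply (iso_node cs cs cs); [apply Permutation_refl|].
  induction cs; constructor; auto. apply IH; simpl; auto. apply IHcs. intros; apply IH; simpl; auto.
Qed.

Lemma iso_size : forall t u, tree_iso t u -> tsize t = tsize u.
Proof.
  apply (tree_ind' (fun t => forall u, _ -> _)). intros cs IH u Hu.
  inversion Hu; subst. simpl. f_equal. match goal with H: Forall2 _ _ _ |- _ => rename H into HF end.
  transitivity (list_sum (map tsize ds')).
  2:{ symmetry. apply Permutation_list_sum. apply Permutation_map. auto. }
  clear Hu. match goal with H: Permutation _ _ |- _ => clear H end. revert IH. induction HF; simpl; intros IH; auto.
  all: idtac.
Qed.

Section Gen.
Variable S : Scal.
Hypothesis GS : goodS S.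
Notation "x +s y" := (sadd S x y) (at level 50, left associativity).
Notation "x *s y" := (smul S x y) (at level 40, left associativity).
Notation s0 := (szero S).
Notation s1 := (sone S).

Lemma add0r x : x +s s0 = x.
Proof. rewrite (addC _ GS), (add0 _ GS). auto. Qed.
Lemma mul0r x : x *s s0 = s0.
Proof. rewrite (mulC _ GS), (mul0 _ GS). auto. Qed.
Lemma mul1r x : x *s s1 = x.
Proof. rewrite (mulC _ GS), (mul1 _ GS). auto. Qed.

Lemma ssum_app l1 l2 : ssum S (l1 ++ l2) = ssum S l1 +s ssum S l2.
Proof. induction l1; simpl. rewrite (add0 _ GS); auto. rewrite IHl1, (addA _ GS); auto. Qed.

Lemma ssum_flat {A B} (f : B -> car S) (g : A -> list B) l :
  ssum S (map f (flat_map g l)) = ssum S (map (fun x => ssum S (map f (g x))) l).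
Proof. induction l; simpl; auto. rewrite map_app, ssum_app, IHl. auto. Qed.

Lemma ssum_ext {A} (f g : A -> car S) l : (forall x, In x l -> f x = g x) ->
  ssum S (map f l) = ssum S (map g l).
Proof. intros H; f_equal; apply map_ext_in; auto. Qed.

Lemma ssum_zero {A} (f : A -> car S) l : (forall x, In x l -> f x = s0) -> ssum S (map f l) = s0.
Proof. induction l; simpl; intros H; auto. rewrite H, IHl by auto. apply (add0 _ GS). Qed.

Lemma ssum_plus {A} (f g : A -> car S) l :
  ssum S (map (fun x => f x +s g x) l) = ssum S (map f l) +s ssum S (map g l).
Proof.
  induction l; simpl. rewrite (add0 _ GS); auto. rewrite IHl.
  rewrite !(addA _ GS). f_equal. rewrite <- !(addA _ GS). f_equal. apply (addC _ GS).
Qed.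

Lemma ssum_exchange {A B} (F : A -> B -> car S) l1 l2 :
  ssum S (map (fun x => ssum S (map (fun y => F x y) l2)) l1) =
  ssum S (map (fun y => ssum S (map (fun x => F x y) l1)) l2).
Proof.
  induction l1; simpl. symmetry. apply ssum_zero. auto.
  rewrite IHl1. rewrite <- ssum_plus. auto.
Qed.

Lemma sprod_perm l l' : Permutation l l' -> sprod S l = sprod S l'.
Proof.
  induction 1; simpl; auto.
  - rewrite IHPermutation; auto.
  - rewrite !(mulA _ GS). f_equal. apply (mulC _ GS).
  - congruence.
Qed.

Lemma nrm_ssum_bound {A} (f : A -> car S) l B :
  (forall x, In x l -> snrm S (f x) <= B) -> snrm S (ssum S (map f l)) <= INR (length l) * B.
Proof.
  induction l; intros H. simpl. rewrite (nrm0 _ GS). lra.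
  replace (INR (length (a::l))) with (INR (length l) + 1) by (rewrite <- S_INR; reflexivity).
  simpl map. unfold ssum in *. simpl fold_right.
  eapply Rle_trans. apply (nrm_tri _ GS).
  specialize (IHl (fun x Hx => H x (or_intror Hx))). specialize (H a (or_introl eq_refl)). lra.
Qed.

Lemma nrm_sprod_bound (a : tree -> car S) C K l :
  1 <= C -> 1 <= K -> (forall x, In x l -> snrm S (a x) <= C * K ^ tsize x) ->
  snrm S (sprod S (map a l)) <= C ^ length l * K ^ lsize l.
Proof.
  intros HC HK. induction l; simpl; intros H.
  - rewrite (nrm1 _ GS). lra.
  - rewrite (nrm_mul _ GS). unfold lsize; simpl. rewrite pow_add.
    specialize (IHl (fun x Hx => H x (or_intror Hx))). specialize (H a0 (or_introl eq_refl)).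
    unfold lsize in IHl.
    replace (C * C ^ length l * (K ^ tsize a0 * K ^ list_sum (map tsize l))) with
      ((C * K ^ tsize a0) * (C ^ length l * K ^ list_sum (map tsize l))) by ring.
    apply Rmult_le_compat; auto using (nrm_ge0 _ GS).
Qed.

End Gen.

Definition lperm_iso (l l' : list tree) : Prop :=
  exists l'', Permutation l' l'' /\ Forall2 tree_iso l l''.
Definition oiso (o o' : option tree) : Prop :=
  match o, o' with None, None => True | Some t, Some t' => tree_iso t t' | _, _ => False end.

Lemma Forall2_refl_iso l : Forall2 tree_iso l l.
Proof. induction l; constructor; auto using tree_iso_refl. Qed.

Lemma lperm_iso_perm l l' : Permutation l l' -> lperm_iso l l'.
Proof. intros H. exists l. split. symmetry; auto. apply Forall2_refl_iso. Qed.

Lemma lperm_iso_cons a a' x x' : tree_iso a a' -> lperm_iso x x' -> lperm_iso (a :: x) (a' :: x').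
Proof. intros H [x'' [P F]]. exists (a' :: x''). split; auto. Qed.

Lemma lperm_iso_app x x' y y' : lperm_iso x x' -> lperm_iso y y' -> lperm_iso (x ++ y) (x' ++ y').
Proof.
  intros [x'' [P F]] [y'' [P' F']]. exists (x'' ++ y''). split.
  apply Permutation_app; auto. apply Forall2_app; auto.
Qed.

Lemma lperm_iso_opt o o' x x' : oiso o o' -> lperm_iso x x' -> lperm_iso (opt_cons o x) (opt_cons o' x').
Proof. destruct o, o'; simpl; intros H1 H2; try contradiction; auto using lperm_iso_cons. Qed.

Lemma lperm_iso_refl x : lperm_iso x x.
Proof. apply lperm_iso_perm. auto. Qed.

Lemma oiso_refl o : oiso o o.
Proof. destruct o; simpl; auto using tree_iso_refl. Qed.

Section Gen.
Variable S : Scal.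
Hypothesis GS : goodS S.

Definition osum (t : tree) (G : option tree -> list tree -> car S) :=
  ssum S (map (fun p => G (fst p) (snd p)) (ost t)).
Definition csum (l : list tree) (H : list tree -> list tree -> car S) :=
  ssum S (map (fun q => H (fst q) (snd q)) (combos l)).

Definition Inv1 (G : option tree -> list tree -> car S) :=
  forall o o' f f', oiso o o' -> lperm_iso f f' -> G o f = G o' f'.
Definition Inv2 (H : list tree -> list tree -> car S) :=
  forall x x' y y', lperm_iso x x' -> lperm_iso y y' -> H x y = H x' y'.

Lemma osum_node cs G : osum (Node cs) G =
  sadd S (G None [Node cs]) (csum cs (fun x y => G (Some (Node x)) y)).
Proof. unfold osum, csum. rewrite ost_node. simpl. rewrite map_map. reflexivity. Qed.

Lemma csum_cons c l H : csum (c :: l) H =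
  ssum S (map (fun p => csum l (fun x y => H (opt_cons (fst p) x) (snd p ++ y))) (ost c)).
Proof. unfold csum. simpl. rewrite (ssum_flat _ GS). f_equal. apply map_ext. intros p.
  rewrite map_map. reflexivity. Qed.

Lemma Inv2_shift H o f : Inv2 H -> Inv2 (fun x y => H (opt_cons o x) (f ++ y)).
Proof. intros HH x x' y y' H1 H2. apply HH. apply lperm_iso_opt; auto using oiso_refl.
  apply lperm_iso_app; auto using lperm_iso_refl. Qed.

Lemma csum_perm : forall l l', Permutation l l' -> forall H, Inv2 H -> csum l H = csum l' H.
Proof.
  induction 1 as [|x0 l0 l0' Hp IHPermutation|x y l|l0 l0' l0'' Hp1 IHPermutation1 Hp2 IHPermutation2]; intros H HH.
  - auto.
  - rewrite !csum_cons. apply ssum_ext. intros p _. apply IHPermutation. apply Inv2_shift; auto.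
  - rewrite !csum_cons.
    transitivity (ssum S (map (fun p => ssum S (map (fun p' =>
        csum l (fun x0 y0 => H (opt_cons (fst p) (opt_cons (fst p') x0)) (snd p ++ (snd p' ++ y0)))) (ost x))) (ost y))).
    { f_equal. apply map_ext. intros p. rewrite csum_cons. reflexivity. }
    transitivity (ssum S (map (fun p' => ssum S (map (fun p =>
        csum l (fun x0 y0 => H (opt_cons (fst p) (opt_cons (fst p') x0)) (snd p ++ (snd p' ++ y0)))) (ost y))) (ost x))).
    { apply (ssum_exchange _ GS). }
    f_equal. apply map_ext. intros p'. rewrite csum_cons. f_equal. apply map_ext. intros p.
    unfold csum. f_equal. apply map_ext. intros q. apply HH.
    + apply lperm_iso_perm. destruct (fst p), (fst p'); simpl; auto using Permutation_refl, perm_swap.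
    + apply lperm_iso_perm. rewrite !app_assoc. apply Permutation_app_tail. apply Permutation_app_comm.
  - rewrite IHPermutation1, IHPermutation2; auto.
Qed.

Lemma csum_f2 : forall l l', Forall2 (fun c c' => forall G, Inv1 G -> osum c G = osum c' G) l l' ->
  forall H, Inv2 H -> csum l H = csum l' H.
Proof.
  induction 1 as [|c c' l l' Hc Hl IH]; intros H HH; auto.
  rewrite !csum_cons.
  transitivity (ssum S (map (fun p => csum l' (fun x y => H (opt_cons (fst p) x) (snd p ++ y))) (ost c))).
  { apply ssum_ext. intros p _. apply IH. apply Inv2_shift; auto. }
  apply (Hc (fun o f => csum l' (fun x y => H (opt_cons o x) (f ++ y)))).
  intros o o' f f' Ho Hf. unfold csum. f_equal. apply map_ext. intros q. apply HH.
  apply lperm_iso_opt; auto using lperm_iso_refl. apply lperm_iso_app; auto using lperm_iso_refl.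
Qed.

Lemma osum_iso : forall t u, tree_iso t u -> forall G, Inv1 G -> osum t G = osum u G.
Proof.
  apply (tree_ind' (fun t => forall u, tree_iso t u -> forall G, Inv1 G -> osum t G = osum u G)). intros cs IH u Hu G HG.
  inversion Hu; subst. rename ds' into ds''.
  rewrite !osum_node. f_equal.
  - apply HG; simpl; auto. apply lperm_iso_cons; auto using lperm_iso_refl.
  - assert (HH : Inv2 (fun x y => G (Some (Node x)) y)).
    { intros x x' y y' [x'' [P1 F1]] Hy. apply HG; auto. simpl. econstructor; eauto. }
    transitivity (csum ds'' (fun x y => G (Some (Node x)) y)).
    + apply csum_f2; auto.
      match goal with H: Forall2 _ _ _ |- _ => rename H into HF end.
      clear Hu. clear dependent ds. induction HF; constructor.
      * intros; apply IH; simpl; auto.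
      * apply IHHF. intros; apply IH; simpl; auto.
    + apply csum_perm; auto. symmetry; auto.
Qed.

End Gen.
Open Scope R_scope.

Section Gen.
Variable S : Scal.
Hypothesis GS : goodS S.

Definition bG (a b : fn S) : option tree -> list tree -> car S :=
  fun o f => smul S (b o) (sprod S (map (fun th => a (Some th)) f)).

Lemma bmul_osum (a b : fn S) t : bmul a b (Some t) = osum S t (bG a b).
Proof. reflexivity. Qed.

Lemma bG_inv (a b : fn S) : invariant a -> invariant b -> Inv1 S (bG a b).
Proof.
  intros Ha Hb o o' f f' Ho [f'' [P F]]. unfold bG. f_equal.
  - destruct o, o'; simpl in Ho; try contradiction; auto.
  - rewrite (sprod_perm _ GS (map (fun th => a (Some th)) f') (map (fun th => a (Some th)) f''))
      by (apply Permutation_map; auto).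
    f_equal. clear P. induction F; simpl; auto. f_equal; auto.
Qed.

Lemma bmul_invariant (a b : fn S) : invariant a -> invariant b -> invariant (bmul a b).
Proof. intros Ha Hb t u H. rewrite !bmul_osum. apply (osum_iso S GS); auto. apply bG_inv; auto. Qed.

Lemma bmul_tame a b : in_BTM S a -> in_BTM S b -> in_BTM S (bmul a b).
Proof.
  intros [Ia [Na [Ca [Ka [HCa [HKa Ba]]]]]] [Ib [Nb [Cb [Kb [HCb [HKb Bb]]]]]].
  split; [apply bmul_invariant; auto|]. split; [simpl; auto|].
  set (C1 := Rmax Ca 1). set (K1 := Rmax (Rmax Ka Kb) 1). set (Cb1 := Rmax Cb 1).
  assert (HC1 : 1 <= C1) by apply Rmax_r. assert (HK1 : 1 <= K1) by apply Rmax_r.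
  assert (HCb1 : 1 <= Cb1) by apply Rmax_r.
  assert (Ba' : forall t, snrm S (a (Some t)) <= C1 * K1 ^ tsize t).
  { intros t. eapply Rle_trans; [apply Ba|]. apply Rmult_le_compat; try lra.
    - apply pow_le; lra.
    - apply Rmax_l.
    - apply pow_incr. split; [lra|]. eapply Rle_trans; [|apply Rmax_l]. apply Rmax_l. }
  assert (Bb' : forall o, snrm S (b o) <= Cb1 * K1 ^ osize o).
  { intros [t|]; simpl.
    - eapply Rle_trans; [apply Bb|]. apply Rmult_le_compat; try lra.
      + apply pow_le; lra.
      + apply Rmax_l.
      + apply pow_incr. split; [lra|]. eapply Rle_trans; [|apply Rmax_l]. apply Rmax_r.
    - rewrite Nb, (nrm1 _ GS). lra. }
  exists Cb1, (2 * C1 * K1). split; [lra|]. split; [nra|].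
  intros t. rewrite bmul_osum. unfold osum.
  eapply Rle_trans.
  { apply (nrm_ssum_bound _ GS) with (B := Cb1 * C1 ^ tsize t * K1 ^ tsize t).
    intros p Hp. unfold bG. rewrite (nrm_mul _ GS).
    pose proof (size_ost t p Hp) as Hs.
    pose proof (length_le_lsize (snd p)) as Hl.
    eapply Rle_trans. apply Rmult_le_compat; [apply (nrm_ge0 _ GS)|apply (nrm_ge0 _ GS)|apply Bb'|].
    apply (nrm_sprod_bound _ GS) with (C := C1) (K := K1); auto.
    replace (Cb1 * K1 ^ osize (fst p) * (C1 ^ length (snd p) * K1 ^ lsize (snd p))) with
      (Cb1 * C1 ^ length (snd p) * (K1 ^ osize (fst p) * K1 ^ lsize (snd p))) by ring.
    rewrite <- pow_add, Hs.
    apply Rmult_le_compat_r. apply pow_le; lra.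
    apply Rmult_le_compat_l. lra. apply Rle_pow; auto. lia. }
  rewrite !Rpow_mult_distr.
  assert (HL : INR (length (ost t)) <= 2 ^ tsize t).
  { replace 2 with (INR 2) by reflexivity. rewrite <- pow_INR. apply le_INR. apply ost_length. }
  assert (0 <= Cb1 * C1 ^ tsize t * K1 ^ tsize t).
  { apply Rmult_le_pos; [apply Rmult_le_pos|]; try lra; apply pow_le; lra. }
  replace (Cb1 * (2 ^ tsize t * C1 ^ tsize t * K1 ^ tsize t)) with
    (2 ^ tsize t * (Cb1 * C1 ^ tsize t * K1 ^ tsize t)) by ring.
  apply Rmult_le_compat_r; auto.
Qed.

End Gen.
Open Scope R_scope.

Section Gen.
Variable S : Scal.
Hypothesis GS : goodS S.

Definition zcond (G : option tree -> list tree -> car S) := forall o f, f <> [] -> G o f = szero S.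

Lemma csum_empty : forall l, Forall (fun c => forall G, zcond G -> osum S c G = G (Some c) []) l ->
  forall H, (forall x y, y <> [] -> H x y = szero S) -> csum S l H = H l [].
Proof.
  induction 1 as [|c l Hc Hl IH]; intros H HH.
  - unfold csum. simpl. apply (add0r _ GS).
  - rewrite (csum_cons S GS).
    transitivity (osum S c (fun o f => H (opt_cons o l) (f ++ []))).
    + unfold osum. apply ssum_ext. intros p _. apply IH.
      intros x y Hy. apply HH. destruct (snd p); simpl; auto; discriminate.
    + rewrite Hc. reflexivity. intros o f Hf. apply HH. rewrite app_nil_r; auto.
Qed.

Lemma osum_empty : forall t G, zcond G -> osum S t G = G (Some t) [].
Proof.
  apply (tree_ind' (fun t => forall G, zcond G -> osum S t G = G (Some t) [])).
  intros cs IH G HG. rewrite (osum_node S). rewrite HG by discriminate. rewrite (add0 _ GS).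
  apply csum_empty. apply Forall_forall. auto.
  intros x y Hy. apply HG; auto.
Qed.

Lemma sprod_zero (a : fn S) f th : In th f -> a (Some th) = szero S ->
  sprod S (map (fun th => a (Some th)) f) = szero S.
Proof.
  induction f; simpl; intros H E; [contradiction|]. destruct H as [->|H].
  - rewrite E. apply (mul0 _ GS).
  - rewrite IHf by auto. apply (mul0r _ GS).
Qed.

Lemma Kn_inverse n (a b : fn S) : in_Kn S n a -> in_BTM S b -> feq (bmul a b) (unit_e S) -> in_Kn S n b.
Proof.
  intros [Ba Za] Bb E. split; auto. intros t Ht.
  specialize (E (Some t)). simpl in E. change (osum S t (bG S a b) = szero S) in E.
  set (G0 := fun o f => match f with [] => bG S a b o f | _ => szero S end) in *.
  assert (E2 : osum S t (bG S a b) = osum S t G0).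
  { unfold osum. apply ssum_ext. intros p Hp. unfold G0.
    destruct (snd p) as [|th f] eqn:Ef; auto.
    pose proof (size_ost t p Hp) as Hs. rewrite Ef in Hs.
    unfold bG. rewrite (sprod_zero a (th :: f) th); [apply (mul0r _ GS)|simpl; auto|].
    apply Za. unfold lsize in Hs. simpl in Hs. lia. }
  rewrite E2, osum_empty in E.
  - unfold G0, bG in E. simpl in E. rewrite (mul1r _ GS) in E. auto.
  - intros o f Hf. unfold G0. destruct f; auto. contradiction.
Qed.

Lemma Kn_mul n (a b : fn S) : in_Kn S n a -> in_Kn S n b -> in_Kn S n (bmul a b).
Proof.
  intros [Ba Za] [Bb Zb]. split. apply bmul_tame; auto.
  intros t Ht. rewrite (bmul_osum S). unfold osum. apply (ssum_zero _ GS).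
  intros p Hp. pose proof (size_ost t p Hp) as Hs. unfold bG.
  destruct (fst p) as [t'|] eqn:Ef.
  - rewrite Zb. apply (mul0 _ GS). simpl in Hs. lia.
  - rewrite (ost_None t p Hp Ef). simpl. rewrite Za by auto. rewrite (mul0 _ GS). apply (mul0r _ GS).
Qed.

Lemma ga_small n (g a : fn S) : in_Kn S n a -> forall th, (tsize th <= n)%nat ->
  bmul g a (Some th) = g (Some th).
Proof.
  intros [[Ia [Na _]] Za] [cs] Hth. rewrite (bmul_osum S), (osum_node S).
  assert (Hc : csum S cs (fun x y => bG S g a (Some (Node x)) y) = szero S).
  { unfold csum. apply (ssum_zero _ GS). intros q Hq.
    pose proof (combos_size cs (fun c _ => size_ost c) q Hq) as Hs.
    unfold bG. rewrite Za. apply (mul0 _ GS). simpl in *. unfold lsize in *. lia. }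
  rewrite Hc, (add0r _ GS). unfold bG. simpl. rewrite Na, (mul1 _ GS), (mul1r _ GS). auto.
Qed.

Lemma Kn_normal n (a g h : fn S) : in_Kn S n a -> in_BTM S g -> in_BTM S h ->
  feq (bmul g h) (unit_e S) -> in_Kn S n (bmul (bmul g a) h).
Proof.
  intros Ka Bg Bh E. split.
  { apply bmul_tame; auto. apply bmul_tame; auto. apply Ka. }
  intros t Ht. specialize (E (Some t)). simpl in E. rewrite (bmul_osum S) in *.
  rewrite <- E. unfold osum. apply ssum_ext. intros p Hp. unfold bG. f_equal. f_equal.
  apply map_ext_in. intros th Hth. apply (ga_small n); auto.
  pose proof (size_ost t p Hp). pose proof (in_le_lsize th (snd p) Hth). lia.
Qed.

End Gen.
Open Scope R_scope.

Lemma pow2_ge_INR k : INR k <= 2 ^ k.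
Proof. induction k. simpl; lra. rewrite S_INR. simpl. pose proof (pow_R1_Rle 2 k). lra. Qed.

Lemma archi2 K : exists k, K <= 2 ^ k.
Proof.
  destruct (INR_archimed 1 K) as [k Hk]. lra. exists k. pose proof (pow2_ge_INR k). lra.
Qed.

Lemma pow2_mono k k' s : (k <= k')%nat -> 2 ^ (k * s) <= 2 ^ (k' * s).
Proof. intros. apply Rle_pow. lra. apply Nat.mul_le_mono_r; auto. Qed.

Lemma pow2_pos m : 0 < 2 ^ m.
Proof. apply pow_lt. lra. Qed.

Section Gen.
Variable S : Scal.
Hypothesis GS : goodS S.

Lemma Ek_abs k (a : fn S) M : (forall t, snrm S (a (Some t)) <= M * 2 ^ (k * tsize t)) ->
  forall t, snrm S (a (Some t)) <= Rabs M * 2 ^ (k * tsize t).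
Proof. intros H t. eapply Rle_trans; [apply H|]. apply Rmult_le_compat_r. left; apply pow2_pos. apply Rle_abs. Qed.

Lemma Mstar_add (x v : fn S) : in_Mstar S x -> in_Mstar S v -> in_Mstar S (fadd x v).
Proof.
  intros [Ix [Nx [kx [Mx Bx]]]] [Iv [Nv [kv [Mv Bv]]]]. split; [|split].
  - intros t u H. unfold fadd. rewrite (Ix t u H), (Iv t u H). auto.
  - unfold fadd. rewrite Nx, Nv. apply (add0 _ GS).
  - exists (Nat.max kx kv), (Rabs Mx + Rabs Mv). intros t. unfold fadd.
    eapply Rle_trans. apply (nrm_tri _ GS).
    pose proof (Ek_abs _ _ _ Bx t). pose proof (Ek_abs _ _ _ Bv t).
    pose proof (pow2_mono kx (Nat.max kx kv) (tsize t) (Nat.le_max_l _ _)).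
    pose proof (pow2_mono kv (Nat.max kx kv) (tsize t) (Nat.le_max_r _ _)).
    pose proof (Rabs_pos Mx). pose proof (Rabs_pos Mv). nra.
Qed.

Lemma Mstar_scale l (x : fn S) : in_Mstar S x -> in_Mstar S (fscale l x).
Proof.
  intros [Ix [Nx [kx [Mx Bx]]]]. split; [|split].
  - intros t u H. unfold fscale. rewrite (Ix t u H). auto.
  - unfold fscale. rewrite Nx. apply (mul0r _ GS).
  - exists kx, (snrm S l * Rabs Mx). intros t. unfold fscale. rewrite (nrm_mul _ GS).
    rewrite Rmult_assoc. apply Rmult_le_compat_l. apply (nrm_ge0 _ GS). apply Ek_abs; auto.
Qed.

Lemma clause5 n (a : fn S) : in_BTM S a -> (in_Kn S n a <-> in_Fn S n (fsub a (unit_e S))).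
Proof.
  intros Ba. split.
  - intros [_ Za]. destruct Ba as [Ia [Na [C [K [HC [HK B]]]]]]. split; [split; [|split]|].
    + intros t u H. unfold fsub. simpl. rewrite (Ia t u H). auto.
    + unfold fsub. simpl. rewrite Na. apply (addN _ GS).
    + destruct (archi2 K) as [k Hk]. exists k, C. intros t. unfold fsub. simpl.
      rewrite (oppz _ GS), (add0r _ GS). eapply Rle_trans; [apply B|].
      apply Rmult_le_compat_l; [lra|]. rewrite pow_mult. apply pow_incr; lra.
    + intros t Ht. unfold fsub. simpl. rewrite Za, (oppz _ GS) by auto. apply (add0 _ GS).
  - intros [_ Z]. split; auto. intros t Ht. specialize (Z t Ht). unfold fsub in Z. simpl in Z.
    rewrite (oppz _ GS), (add0r _ GS) in Z. auto.
Qed.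

Lemma clause6 n (v : fn S) : in_Fn S n v -> in_Kn S n (fadd (unit_e S) v).
Proof.
  intros [[Iv [Nv [k [M B]]]] Zv]. split; [split; [|split]|].
  - intros t u H. unfold fadd. simpl. rewrite (Iv t u H). auto.
  - unfold fadd. simpl. rewrite Nv. apply (add0r _ GS).
  - exists (Rabs M + 1), (2 ^ k). split. pose proof (Rabs_pos M). lra. split. apply pow2_pos.
    intros t. unfold fadd. simpl. rewrite (add0 _ GS). eapply Rle_trans; [apply B|].
    rewrite <- pow_mult. apply Rmult_le_compat_r. left; apply pow2_pos.
    pose proof (Rle_abs M). lra.
  - intros t Ht. unfold fadd. simpl. rewrite Zv by auto. apply (add0 _ GS).
Qed.

Lemma clause1 n : in_Kn S n (unit_e S).
Proof.
  split; [split; [|split]|].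
  - intros t u _. reflexivity.
  - reflexivity.
  - exists 1, 1. split; [lra|]. split; [lra|]. intros t. simpl. rewrite (nrm0 _ GS), pow1. lra.
  - intros. reflexivity.
Qed.

Lemma clause7 n : Mclosed S (in_Fn S n).
Proof.
  split. { intros x [H _]; auto. }
  split. { intros x [H _]; auto. }
  intros x [Mx NF].
  assert (Ht0 : exists t0, (tsize t0 <= n)%nat /\ x (Some t0) <> szero S).
  { apply NNPP. intros Hn. apply NF. split; auto. intros t Ht. apply NNPP. intros Hx. apply Hn. eauto. }
  destruct Ht0 as [t0 [Ht0 Hx0]].
  assert (Hpos : 0 < snrm S (x (Some t0))).
  { destruct (nrm_ge0 _ GS (x (Some t0))); auto. exfalso. apply Hx0. apply (nrm_eq0 _ GS). auto. }
  set (c := snrm S (x (Some t0)) / 2).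
  exists (fun v => in_Mstar S v /\ snrm S (v (Some t0)) <= c). split; [|split; [|split]].
  - intros v [H _]; auto.
  - intros u v l m [Mu Bu] [Mv Bv] Hlm. split.
    + apply Mstar_add; apply Mstar_scale; auto.
    + unfold fadd, fscale. eapply Rle_trans. apply (nrm_tri _ GS). rewrite !(nrm_mul _ GS).
      pose proof (nrm_ge0 _ GS l). pose proof (nrm_ge0 _ GS m). unfold c in *. nra.
  - intros k. exists (c / 2 ^ (k * tsize t0)). split.
    + unfold c. apply Rdiv_lt_0_compat; [lra|apply pow2_pos].
    + intros a Ma Ba. split; auto. specialize (Ba t0).
      pose proof (pow2_pos (k * tsize t0)).
      replace c with (c / 2 ^ (k * tsize t0) * 2 ^ (k * tsize t0)) by (field; lra). auto.
  - intros v [Mv Bv]. split. apply Mstar_add; auto.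
    intros [_ Z]. specialize (Z t0 Ht0). unfold fadd in Z.
    pose proof (nrm_tri _ GS (sadd S (x (Some t0)) (v (Some t0))) (sopp S (v (Some t0)))) as T.
    rewrite (addK _ GS), Z, (nrm0 _ GS), (nrm_opp _ GS) in T. unfold c in *. lra.
Qed.

End Gen.
Open Scope R_scope.

Lemma lists_enum {A} (L : list A) m : exists LL, forall l, (length l <= m)%nat ->
  (forall c, In c l -> In c L) -> In l LL.
Proof.
  induction m.
  - exists [[]]. intros [|x l] H _; simpl in *; auto. lia.
  - destruct IHm as [LL H]. exists (LL ++ flat_map (fun c => map (cons c) LL) L).
    intros [|x l] Hl Hc; apply in_or_app.
    + left. apply H; simpl; auto. all: try lia. all: intros c [].
    + right. apply in_flat_map. exists x. split. apply Hc; simpl; auto.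
      apply in_map. apply H. simpl in Hl; lia. intros c Hc'. apply Hc; simpl; auto.
Qed.

Lemma trees_enum n : exists L, forall u, (tsize u <= n)%nat -> In u L.
Proof.
  induction n.
  - exists []. intros u H. pose proof (tsize_pos u). lia.
  - destruct IHn as [L HL]. destruct (lists_enum L n) as [LL HLL].
    exists (map Node LL). intros [cs] Hs. apply in_map. simpl in Hs. apply HLL.
    + pose proof (length_le_lsize cs). unfold lsize in *. lia.
    + intros c Hc. apply HL. pose proof (in_le_lsize c cs Hc). unfold lsize in *. lia.
Qed.

Lemma trees_enum2 n : exists L, (forall u, (tsize u <= n)%nat -> In u L) /\ (forall u, In u L -> (tsize u <= n)%nat).
Proof.
  destruct (trees_enum n) as [L HL]. exists (filter (fun u => Nat.leb (tsize u) n) L). split.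
  - intros u Hu. apply filter_In. split; auto. apply Nat.leb_le; auto.
  - intros u Hu. apply filter_In in Hu as [_ Hu]. apply Nat.leb_le; auto.
Qed.

Definition eqv := clos_refl_sym_trans tree tree_iso.

Lemma eqv_size t u : eqv t u -> tsize t = tsize u.
Proof. induction 1; auto. apply iso_size; auto. congruence. Qed.

Lemma eqv_inv {S} (x : fn S) t u : invariant x -> eqv t u -> x (Some t) = x (Some u).
Proof. intros Hx. induction 1; auto. congruence. Qed.

Lemma eqv_sym t u : eqv t u -> eqv u t.
Proof. apply rst_sym. Qed.
Lemma eqv_trans t u v : eqv t u -> eqv u v -> eqv t v.
Proof. apply rst_trans. Qed.

Section Gen.
Variable S : Scal.
Hypothesis GS : goodS S.

Definition gfun (t : tree) : fn S := fun o => match o with None => szero S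
  | Some u => if excluded_middle_informative (eqv t u) then sone S else szero S end.

Fixpoint mkcs (x : fn S) (prev L : list tree) : list (car S) :=
  match L with [] => []
  | t :: L' => (if excluded_middle_informative (Exists (fun p => eqv p t) prev) then szero S else x (Some t))
               :: mkcs x (t :: prev) L' end.

Lemma mkcs_length x prev L : length (mkcs x prev L) = length L.
Proof. revert prev; induction L; simpl; auto. Qed.

Lemma lc_None x prev L : lin_comb S (mkcs x prev L) (map gfun L) None = szero S.
Proof.
  revert prev; induction L; intros prev; [reflexivity|].
  change (sadd S (smul S (if excluded_middle_informative (Exists (fun p => eqv p a) prev) then szero S else x (Some a)) (szero S)) (lin_comb S (mkcs x (a :: prev) L) (map gfun L) None) = szero S).
  rewrite IHL, (mul0r _ GS). apply (add0 _ GS).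
Qed.

Lemma lc_step x prev t L o : lin_comb S (mkcs x prev (t::L)) (map gfun (t::L)) o =
  sadd S (smul S (if excluded_middle_informative (Exists (fun p => eqv p t) prev) then szero S else x (Some t)) (gfun t o))
    (lin_comb S (mkcs x (t::prev) L) (map gfun L) o).
Proof. reflexivity. Qed.

Lemma gfun_Some t u : gfun t (Some u) = if excluded_middle_informative (eqv t u) then sone S else szero S.
Proof. reflexivity. Qed.

Lemma lc_a x u : forall L prev, Exists (fun p => eqv p u) prev ->
  lin_comb S (mkcs x prev L) (map gfun L) (Some u) = szero S.
Proof.
  induction L as [|t L IH]; intros prev Hp; [reflexivity|]. rewrite lc_step, gfun_Some.
  rewrite IH by (constructor 2; auto).
  destruct (excluded_middle_informative (eqv t u)) as [E|E].
  - destruct (excluded_middle_informative (Exists (fun p => eqv p t) prev)) as [E2|E2].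
    + rewrite (mul0 _ GS). apply (add0 _ GS).
    + exfalso. apply E2. apply Exists_exists in Hp as [p [Hp Hpu]]. apply Exists_exists.
      exists p. split; auto. eapply eqv_trans; eauto. apply eqv_sym; auto.
  - rewrite (mul0r _ GS). apply (add0 _ GS).
Qed.

Lemma lc_c x u : forall L prev, ~ Exists (fun t => eqv t u) L ->
  lin_comb S (mkcs x prev L) (map gfun L) (Some u) = szero S.
Proof.
  induction L as [|t L IH]; intros prev Hp; [reflexivity|]. rewrite lc_step, gfun_Some.
  rewrite IH by (intro; apply Hp; constructor 2; auto).
  destruct (excluded_middle_informative (eqv t u)) as [E|E].
  - exfalso. apply Hp. constructor; auto.
  - rewrite (mul0r _ GS). apply (add0 _ GS).
Qed.

Lemma lc_b x u : invariant x -> forall L prev, ~ Exists (fun p => eqv p u) prev ->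
  Exists (fun t => eqv t u) L ->
  lin_comb S (mkcs x prev L) (map gfun L) (Some u) = x (Some u).
Proof.
  intros Ix. induction L as [|t L IH]; intros prev Hp HL. { inversion HL. }
  rewrite lc_step, gfun_Some.
  destruct (excluded_middle_informative (eqv t u)) as [E|E].
  - rewrite lc_a by (constructor; auto). rewrite (add0r _ GS).
    destruct (excluded_middle_informative (Exists (fun p => eqv p t) prev)) as [E2|E2].
    + exfalso. apply Hp. apply Exists_exists in E2 as [p [Hp1 Hp2]]. apply Exists_exists.
      exists p. split; auto. eapply eqv_trans; eauto.
    + rewrite (mul1r _ GS). apply eqv_inv; auto.
  - rewrite (mul0r _ GS), (add0 _ GS). apply IH.
    + intros H. inversion H; subst; auto.
    + inversion HL; subst; auto. contradiction.
Qed.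

Definition trunc (n : nat) (x : fn S) : fn S := fun o => match o with None => szero S
  | Some t => if Nat.leb (tsize t) n then x (Some t) else szero S end.

Lemma trunc_add n x y : trunc n (fadd x y) = fadd (trunc n x) (trunc n y).
Proof. apply functional_extensionality. intros [t|]; unfold trunc, fadd; simpl.
  destruct (Nat.leb _ _); auto. all: rewrite (add0 _ GS); auto. Qed.

Lemma trunc_scale n l x : trunc n (fscale l x) = fscale l (trunc n x).
Proof. apply functional_extensionality. intros [t|]; unfold trunc, fscale; simpl.
  destruct (Nat.leb _ _); auto. all: rewrite (mul0r _ GS); auto. Qed.

Lemma trunc_Mstar n x : in_Mstar S x -> in_Mstar S (trunc n x).
Proof.
  intros [Ix [Nx [k [M B]]]]. split; [|split]; auto.
  - intros t u H. unfold trunc. rewrite (iso_size t u H). destruct (Nat.leb _ _); auto.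
  - exists k, (Rabs M). intros t. unfold trunc. destruct (Nat.leb _ _).
    + apply (Ek_abs S); auto.
    + rewrite (nrm0 _ GS). apply Rmult_le_pos. apply Rabs_pos. left; apply pow2_pos.
Qed.

Lemma clause8 n : split_finite_codim S (in_Fn S n).
Proof.
  destruct (trees_enum2 n) as [L [HL1 HL2]].
  exists (trunc n), (map gfun L). split; [|split; [|split; [|split; [|split]]]].
  - split; [|split].
    + apply trunc_Mstar.
    + intros x y _ _ o. rewrite trunc_add; auto.
    + intros l x _ o. rewrite trunc_scale; auto.
  - intros U [HU1 HU2]. split. { intros x [H _]; auto. }
    intros x [Mx Ux]. destruct (HU2 _ Ux) as [V [V1 [V2 [V3 V4]]]].
    exists (fun v => in_Mstar S v /\ V (trunc n v)). split; [|split; [|split]].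
    + intros v [H _]; auto.
    + intros u v l m [Mu Vu] [Mv Vv] Hlm. split. apply (Mstar_add S GS); apply (Mstar_scale S GS); auto.
      rewrite trunc_add, !trunc_scale. apply V2; auto.
    + intros k. destruct (V3 k) as [r [Hr Hb]]. exists r. split; auto.
      intros a Ma Ba. split; auto. apply Hb. apply trunc_Mstar; auto.
      intros t. unfold trunc. destruct (Nat.leb _ _); auto.
      rewrite (nrm0 _ GS). apply Rmult_le_pos; [lra|left; apply pow2_pos].
    + intros v [Mv Vv]. split. apply (Mstar_add S GS); auto. rewrite trunc_add. apply V4; auto.
  - intros x _ [t|]; unfold trunc; simpl; auto. destruct (Nat.leb _ _); auto.
  - intros x Mx. split.
    + intros H. split; auto. intros t Ht. specialize (H (Some t)). unfold trunc in H.
      apply Nat.leb_le in Ht. rewrite Ht in H. auto.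
    + intros [_ Z] [t|]; unfold trunc, fzero; auto. destruct (Nat.leb _ _) eqn:E; auto.
      apply Z. apply Nat.leb_le; auto.
  - apply Forall_forall. intros g Hg. apply in_map_iff in Hg as [t [<- _]]. split; [|split].
    + intros u v H. unfold gfun.
      destruct (excluded_middle_informative (eqv t u)) as [E1|E1];
      destruct (excluded_middle_informative (eqv t v)) as [E2|E2]; auto; exfalso.
      * apply E2. eapply eqv_trans; eauto. apply rst_step; auto.
      * apply E1. eapply eqv_trans; eauto. apply eqv_sym. apply rst_step; auto.
    + reflexivity.
    + exists 0%nat, 1. intros u. simpl. unfold gfun.
      destruct (excluded_middle_informative _); [rewrite (nrm1 _ GS)|rewrite (nrm0 _ GS)]; lra.
  - intros x Mx. exists (mkcs x [] L). split. { rewrite mkcs_length, length_map; auto. }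
    intros [u|].
    + unfold trunc. destruct (Nat.leb (tsize u) n) eqn:E.
      * symmetry. apply lc_b. apply Mx. intros H; inversion H.
        apply Exists_exists. exists u. split. apply HL1. apply Nat.leb_le; auto. apply rst_refl.
      * symmetry. apply lc_c. intros H. apply Exists_exists in H as [t [Ht Htu]].
        apply eqv_size in Htu. specialize (HL2 t Ht). apply Nat.leb_gt in E. lia.
    + simpl. symmetry. apply lc_None.
Qed.

End Gen.

Theorem proposition2p10 :
  forall n : nat, forall S : Scal, (S = CS \/ S = RS) ->
    (* K_n is a subgroup of B^K_TM *)
    in_Kn S n (unit_e S) /\
    (forall a b, in_Kn S n a -> in_Kn S n b -> in_Kn S n (bmul a b)) /\
    (forall a b, in_Kn S n a -> in_BTM S b -> feq (bmul a b) (unit_e S) -> in_Kn S n b) /\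
    (* normal *)
    (forall a g h, in_Kn S n a -> in_BTM S g -> in_BTM S h ->
       feq (bmul g h) (unit_e S) -> in_Kn S n (bmul (bmul g a) h)) /\
    (* in the global chart a |-> a - e, K_n is the affine subspace e + F_n *)
    (forall a, in_BTM S a -> (in_Kn S n a <-> in_Fn S n (fsub a (unit_e S)))) /\
    (forall v, in_Fn S n v -> in_Kn S n (fadd (unit_e S) v)) /\
    (* F_n is closed, split, of finite codimension (hence K_n is a closed
       split submanifold of finite codimension, i.e. a closed Lie subgroup) *)
    Mclosed S (in_Fn S n) /\
    split_finite_codim S (in_Fn S n).
Proof.
  intros n S HS.
  assert (GS : goodS S) by (destruct HS; subst; [apply good_CS|apply good_RS]).
  split. apply (clause1 S GS).
  split. intros; apply (Kn_mul S GS); auto.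
  split. intros; eapply (Kn_inverse S GS); eauto.
  split. intros; apply (Kn_normal S GS); auto.
  split. intros; apply (clause5 S GS); auto.
  split. intros; apply (clause6 S GS); auto.
  split. apply (clause7 S GS).
  apply (clause8 S GS).
Qed.
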